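(* For every positive integer $m$, the stopping distance of $H(m-1,m)$ is $2^m$.
   Context: All matrices are binary. The matrices $G(r,m)$, $0\le r\le m$, are defined recursively by $G(m,m) = I_{2^m}$, $G(0,m) = (11\cdots1)$ (length $2^m$), and for $0<r<m$, $G(r,m) = \begin{pmatrix} G(r,m-1) & G(r,m-1) \\ \mathbf{0} & G(r-1,m-1)\end{pmatrix}$. Define $H(0,m) = (11\cdots1)$ (length $2^m$), $H(m-1,m) = G(m-1,m)$, $H(m,m) = I_{2^m}$ for all $m\ge0$. For a matrix $H$, the stopping distance $s(H)$ is the largest integer such that for every set of $s(H)-1$ or fewer columns of $H$, the projection of $H$ onto those columns contains at least one row of Hamming weight exactly one. *)

(* Defs.v *)
(* Binary matrices are represented as sequences of rows,
   each row a sequence of booleans (true = 1). *)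
From mathcomp Require Import all_boot.
Set Implicit Arguments. Unset Strict Implicit. Unset Printing Implicit Defensive.

Definition id_rows (n : nat) : seq (seq bool) :=
  [seq [seq i == j | j <- iota 0 n] | i <- iota 0 n].

(* G r m, following the recursive definition:
   G(m,m) = I_{2^m}, G(0,m) = all-ones row of length 2^m, and for 0<r<m
   G(r,m) = [[G(r,m-1), G(r,m-1)]; [0, G(r-1,m-1)]].
   (Values for r > m are irrelevant; they are set to the identity.) *)
Fixpoint G (r m : nat) {struct m} : seq (seq bool) :=
  match m with
  | 0 => if r == 0 then [:: [:: true]] else id_rows 1
  | m'.+1 =>
      if r == 0 then [:: nseq (2 ^ m'.+1) true]
      else if m'.+1 <= r then id_rows (2 ^ m'.+1)
      else [seq s ++ s | s <- G r m'] ++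
           [seq nseq (2 ^ m') false ++ s | s <- G r.-1 m']
  end.

(* H(0,m) = all ones, H(m-1,m) = G(m-1,m), H(m,m) = I_{2^m}.
   Only these cases are specified in the context; other r give [::]. *)
Definition H (r m : nat) : seq (seq bool) :=
  if r == 0 then [:: nseq (2 ^ m) true]
  else if (r == m.-1) || (r == m) then G r m
  else [::].

Definition proj_weight (n : nat) (row : seq bool) (S : {set 'I_n}) : nat :=
  #|[set j in S | nth false row j]|.

Definition has_weight_one_row (n : nat) (Hm : seq (seq bool)) (S : {set 'I_n}) : bool :=
  has (fun row => proj_weight row S == 1) Hm.

Definition stopping_prop (n : nat) (Hm : seq (seq bool)) (s : nat) : Prop :=
  forall S : {set 'I_n}, S != set0 -> #|S| < s -> has_weight_one_row Hm S.

Definition is_stopping_distance (n : nat) (Hm : seq (seq bool)) (s : nat) : Prop :=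
  stopping_prop n Hm s /\ forall t, stopping_prop n Hm t -> t <= s.

(* Main.v *)
Require Import Defs.
From mathcomp Require Import all_boot.

Definition wt n (r : seq bool) (P : nat -> bool) :=
  count (fun j => P j && nth false r j) (iota 0 n).

Lemma wt_split n r1 r2 P : size r1 = n ->
  wt (n + n) (r1 ++ r2) P = wt n r1 P + wt n r2 (fun j => P (n + j)).
Proof.
move=> hs; rewrite /wt iotaD count_cat add0n -(addn0 n) iotaDl addn0 count_map.
congr (_ + _); apply: eq_in_count => j; rewrite mem_iota /= add0n => hj.
  by rewrite nth_cat hs hj.
by rewrite nth_cat hs ltnNge leq_addr /= addKn.
Qed.

Lemma wt_id n i P : i < n ->
  wt n [seq i == j | j <- iota 0 n] P = P i.
Proof.
move=> hi; rewrite /wt.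
rewrite (eq_in_count (a2 := fun j => (j == i) && P i)); last first.
  move=> j; rewrite mem_iota add0n /= => hj.
  rewrite (nth_map 0) ?size_iota // nth_iota // add0n eq_sym.
  by case: eqP => [->|]; rewrite ?andbT ?andbF.
case: (P i); last by rewrite (eq_count (a2 := pred0)) ?count_pred0 // => j; rewrite andbF.
rewrite (eq_count (a2 := pred1 i)) => [|j]; last by rewrite andbT.
by rewrite count_uniq_mem ?iota_uniq // mem_iota add0n hi.
Qed.

Lemma wt_zero n P : wt n (nseq n false) P = 0.
Proof.
rewrite /wt (eq_in_count (a2 := pred0)) ?count_pred0 // => j.
by rewrite mem_iota add0n /= => hj; rewrite nth_nseq hj andbF.
Qed.

Lemma G_step k : G k.+1 k.+2 = [seq s ++ s | s <- id_rows (2^k.+1)] ++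
   [seq nseq (2^k.+1) false ++ s | s <- G k k.+1].
Proof. by rewrite /= ltnn leqnn. Qed.

Lemma G_base : G 0 1 = [:: nseq (1 + 1) true].
Proof. by []. Qed.

Lemma pow2S k : 2 ^ k.+1 = 2 ^ k + 2 ^ k.
Proof. by rewrite expnS mul2n addnn. Qed.

Lemma idrow_size n i : size [seq i == j | j <- iota 0 n] = n.
Proof. by rewrite size_map size_iota. Qed.

Lemma key k : forall P : nat -> bool, (exists2 j, j < 2^k.+1 & P j) ->
  (exists2 j, j < 2^k.+1 & ~~ P j) ->
  has (fun r => wt (2^k.+1) r P == 1) (G k k.+1).
Proof.
elim: k => [|k IH] P [a ha Pa] [b hb Pb].
  rewrite G_base /= orbF /wt /=.
  move: ha hb; rewrite expn1.
  by case: a Pa => [|[|a]] // Pa _; case: b Pb => [|[|b]] // Pb _;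
    move: Pa Pb; case: (P 0); case: (P 1).
rewrite G_step has_cat pow2S; rewrite pow2S in ha hb.
have [/existsP [i hP]|hall] := boolP [exists i : 'I_(2^k.+1), P i != P (2^k.+1 + i)].
  apply/orP; left; apply/hasP.
  exists ([seq (val i) == j | j <- iota 0 (2^k.+1)] ++ [seq (val i) == j | j <- iota 0 (2^k.+1)]).
    apply/mapP; exists [seq (val i) == j | j <- iota 0 (2^k.+1)] => //.
    by apply/mapP; exists (val i); rewrite ?mem_iota ?add0n ?ltn_ord.
  rewrite wt_split ?idrow_size // !wt_id ?ltn_ord //.
  by move: hP; case: (P _); case: (P _).
apply/orP; right; rewrite has_map.
set n := 2 ^ k.+1 in ha hb hall *.
have eqP' : forall j, j < n -> P j = P (n + j).
  move=> j hj; apply/eqP; apply: contraNT hall => h; apply/existsP.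
  by exists (Ordinal hj).
have tr : forall j, j < n + n -> exists2 j', j' < n & P j = P (n + j').
  move=> j hj; case: (ltnP j n) => hjn; first by exists j => //; apply: eqP'.
  exists (j - n); first by rewrite ltn_subLR.
  by rewrite subnKC.
have : has (fun r => wt n r (fun j => P (n + j)) == 1) (G k k.+1).
  apply: IH.
    by have [a' ha' e] := tr a ha; exists a'; rewrite // -e.
  by have [b' hb' e] := tr b hb; exists b'; rewrite // -e.
apply: sub_has => r /=.
by rewrite wt_split ?size_nseq // wt_zero.
Qed.

Lemma ub k : forall P : nat -> bool, (forall j, j < 2^k.+1 -> P j) ->
  all (fun r => wt (2^k.+1) r P != 1) (G k k.+1).
Proof.
elim: k => [|k IH] P hP.
  by rewrite G_base /= andbT /wt /= !hP.
rewrite G_step all_cat pow2S; rewrite pow2S in hP; apply/andP; split.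
  apply/allP => r /mapP [s /mapP [i hi ->] ->].
  move: hi; rewrite mem_iota add0n => hi.
  by rewrite wt_split ?idrow_size // !wt_id // !hP // ?ltn_add2l // (leq_trans hi) ?leq_addr.
rewrite all_map.
have := IH (fun j => P (2 ^ k.+1 + j)) (fun j hj => hP (2 ^ k.+1 + j) ltac:(by rewrite ltn_add2l)).
apply: sub_all => r /=.
by rewrite wt_split ?size_nseq // wt_zero.
Qed.

Definition setP' n (S : {set 'I_n}) (j : nat) : bool :=
  if (insub j : option 'I_n) is Some i then i \in S else false.
Arguments setP' {n}.

Lemma pw_wt n row (S : {set 'I_n}) : proj_weight row S = wt n row (setP' S).
Proof.
rewrite /proj_weight /wt cardE /enum_mem size_filter -enumT -val_enum_ord count_map.
apply: eq_count => i /=; rewrite !inE /setP' valK; by [].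
Qed.

Lemma H_G m : 0 < m -> H m.-1 m = G m.-1 m.
Proof. by case: m => [|[|k]] //; rewrite /H /= eqxx. Qed.

Theorem lemma11 (m : nat) : 0 < m ->
  is_stopping_distance (2 ^ m) (H m.-1 m) (2 ^ m).
Proof.
move=> m0; rewrite H_G //; case: m m0 => [|k] // _; rewrite [k.+1.-1]/=.
split.
  move=> S /set0Pn [a aS] hS.
  have [/existsP [b bS]|hall] := boolP [exists i, i \notin S].
    rewrite /has_weight_one_row.
    apply: (sub_has (a1 := fun r => wt (2^k.+1) r (setP' S) == 1)).
      by move=> r; rewrite pw_wt.
    apply: key.
      by exists (val a); rewrite ?ltn_ord // /setP' valK.
    by exists (val b); rewrite ?ltn_ord // /setP' valK.
  have : S = setT.
    apply/setP => i; rewrite inE; apply: contraNT hall => h.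
    by apply/existsP; exists i.
  by move=> eS; move: hS; rewrite eS cardsT card_ord ltnn.
move=> t st; rewrite leqNgt; apply/negP => lt.
have ne : [set: 'I_(2^k.+1)] != set0.
  by apply/set0Pn; exists (Ordinal (expn_gt0 2 k.+1)); rewrite inE.
have := st _ ne; rewrite cardsT card_ord => /(_ lt).
rewrite /has_weight_one_row; apply/negP; rewrite -all_predC.
have h := ub k (setP' [set: 'I_(2^k.+1)]).
have /h : forall j, j < 2 ^ k.+1 -> setP' [set: 'I_(2^k.+1)] j.
  by move=> j hj; rewrite /setP' insubT inE.
apply: sub_all => r /=; by rewrite pw_wt.
Qed.
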